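(* Let $P$ be an EVM program, $(\mathcal{X}_{pc})_{pc}$ the least solution of its addresses equation system, and $G=\langle V,E\rangle$ its stack-sensitive control flow graph. Then for every execution trace $t\equiv S_0\Rightarrow\dots\Rightarrow S_m$ of $P$ from $S_0=\langle 0,\langle 0,\sigma_\emptyset\rangle\rangle$, if $B^{(0)},B^{(1)},\dots,B^{(k)}$ is the sequence of blocks executed by $t$, there is a directed walk $v_0\to v_1\to\dots\to v_k$ in $G$ with $v_0=(B^{(0)},\langle 0,\sigma_\emptyset\rangle)$ such that each $v_\ell$ is a replica of $B^{(\ell)}$, i.e. $v_\ell=(B^{(\ell)},s_\ell)$ for some stack state $s_\ell$.
   Context: EVM programs. An EVM program $P\equiv b_0,\dots,b_p$ is a finite sequence of instructions, each located at a program counter (byte offset); $b_{pc}$ is the instruction at $pc$, $size(b)$ its number of bytes, so the next instruction is at $pc+size(b_{pc})$. Let $Jump=\{\texttt{JUMP},\texttt{JUMPI}\}$, $End=\{\texttt{REVERT},\texttt{STOP},\texttt{INVALID}\}$, $\mathcal{J}(P)=\{pc\mid b_{pc}\equiv\texttt{JUMPDEST}\}$. Other instructions $b^{\delta,\alpha}$ remove $\delta$ and then add $\alpha$ stack items. Blocks. $blocks(P)$ is the set of maximal segments $B_i\equiv b_i,\dots,b_j$ of consecutive instructions such that no instruction strictly between $b_i$ and $b_j$ is in $Jump\cup End\cup\{\texttt{JUMPDEST}\}$; $b_i$ is the first instruction of $P$, or $b_i\equiv\texttt{JUMPDEST}$, or the instruction preceding $b_i$ is $\texttt{JUMPI}$;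 and $b_j$ is the last instruction of $P$, or $b_j\in Jump\cup End$, or the instruction following $b_j$ is $\texttt{JUMPDEST}$. A block is identified by the program counter $i$ of its first instruction. The sequence of blocks executed by a trace $t$ is obtained by listing, in order, the block $B_{pc}$ for each state $\langle pc,\_\rangle$ of $t$ whose $pc$ is the first instruction of a block. Stack states: pairs $\langle n,\sigma\rangle$, $n\ge0$ the stack size (positions $s_0,\dots,s_{n-1}$, top $s_{n-1}$), $\sigma$ a partial map from positions to finite sets of jump destinations; $\sigma_\emptyset$ the empty map; $m[x\mapsto y]$ update; $m\backslash[x_1,\dots,x_k]$ removal from domain. Semantics. States $\langle pc,\langle n,\sigma\rangle\rangle$; transitions: $b_{pc}=\texttt{JUMP}$: $\Rightarrow\langle v,\langle n-1,\sigma\backslash[s_{n-1}]\rangle\rangle$ with $\sigma(s_{n-1})=\{v\}$; $b_{pc}=\texttt{JUMPI}$: $\Rightarrow\langle v,\langle n-2,\sigma\backslash[s_{n-1},s_{n-2}]\rangle\rangle$ with $\sigma(s_{n-1})=\{v\}$, or $\Rightarrow\langle pc+size(b_{pc}),\langle n-2,\sigma\backslash[s_{n-1},s_{n-2}]\rangle\rangle$; for $b_{pc}\notin Jump\cup End$: $\Rightarrow\langle pc+size(b_{pc}),\lambda(b_{pc},\langle n,\sigma\rangle)\rangle$; no transition from $End$. Update function $\lambda$: $\lambda(\texttt{JUMP},\langle n,\sigma\rangle)=\langle n-1,\sigma\backslash[s_{n-1}]\rangle$; $\lambda(\texttt{JUMPI},\langle n,\sigma\rangle)=\langle n-2,\sigma\backslash[s_{n-1},s_{n-2}]\rangle$;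 $\lambda(\texttt{PUSH}x\ v,\langle n,\sigma\rangle)=\langle n+1,\sigma[s_n\mapsto\{v\}]\rangle$ if $v\in\mathcal{J}(P)$, else $\langle n+1,\sigma\rangle$; $\lambda(\texttt{DUP}x,\langle n,\sigma\rangle)=\langle n+1,\sigma[s_n\mapsto\sigma(s_{n-x})]\rangle$ if $s_{n-x}\in dom(\sigma)$, else $\langle n+1,\sigma\rangle$; $\lambda(\texttt{SWAP}x,\langle n,\sigma\rangle)=\langle n,\sigma'\rangle$ with the contents (defined or undefined) of $s_{n-1}$ and $s_{n-x-1}$ exchanged; other $b^{\delta,\alpha}\notin End$: $\lambda(b,\langle n,\sigma\rangle)=\langle n-\delta+\alpha,\sigma\backslash[s_{n-1},\dots,s_{n-\delta}]\rangle$. Abstract states: partial maps from stack states to sets of stack states, ordered by domain inclusion and pointwise inclusion; bottom the empty map. $\tau(b,\pi)(s)=\{\lambda(b,t)\mid t\in\pi(s)\}$ on $dom(\pi)$; $idmap(t)$ maps $t$ to $\{t\}$ only. Addresses equation system: variables $\mathcal{X}_{pc}$ with constraints $\mathcal{X}_0\sqsupseteq idmap(\langle0,\sigma_\emptyset\rangle)$; if $b_{pc}=\texttt{JUMP}$: $\mathcal{X}_v\sqsupseteq idmap(\lambda(b_{pc},\langle n,\sigma\rangle))$ for all $s\in dom(\mathcal{X}_{pc})$, $\langle n,\sigma\rangle\in\mathcal{X}_{pc}(s)$, $v\in\sigma(s_{n-1})$; if $b_{pc}=\texttt{JUMPI}$: the same plus $\mathcal{X}_{pc+1}\sqsupseteq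 idmap(\lambda(b_{pc},\langle n,\sigma\rangle))$; if $b_{pc}\notin End\cup Jump$ and $b_{pc+size(b_{pc})}=\texttt{JUMPDEST}$: $\mathcal{X}_{pc+size(b_{pc})}\sqsupseteq idmap(\lambda(b_{pc},\langle n,\sigma\rangle))$ for all such $s,\langle n,\sigma\rangle$; otherwise if $b_{pc}\notin End\cup Jump$: $\mathcal{X}_{pc+size(b_{pc})}\sqsupseteq\tau(b_{pc},\mathcal{X}_{pc})$. Take the least solution. Stack-sensitive CFG $G=\langle V,E\rangle$: $V=\{(B_i,s)\mid B_i\in blocks(P),\ s\in dom(\mathcal{X}_i)\}$ (replicas of block $B_i$, one per entry stack state). For each block $B_i\equiv b_i,\dots,b_j$, each $s\in dom(\mathcal{X}_j)$ and each $\langle n',\sigma'\rangle\in\mathcal{X}_j(s)$, with $\langle n'',\sigma''\rangle=\lambda(b_j,\langle n',\sigma'\rangle)$: if $b_j\in Jump$, there is an edge $(B_i,s)\to(B_d,\langle n'',\sigma''\rangle)$ for every $d\in\sigma'(s_{n'-1})$; if $b_j\neq\texttt{JUMP}$ and $b_j\notin End$, there is an edge $(B_i,s)\to(B_d,\langle n'',\sigma''\rangle)$ with $d=j+size(b_j)$. $E$ is the set of all these edges. *)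

(* Defs.v *)
From mathcomp Require Import all_boot finmap.
Set Implicit Arguments.
Unset Strict Implicit.
Unset Printing Implicit Defensive.
Local Open Scope fset_scope.
Local Open Scope nat_scope.

(* Instructions.  [OTHER delta alpha] is any other instruction b^{delta,alpha}. *)
Inductive instr :=
| JUMP | JUMPI | JUMPDEST | REVERT | STOP | INVALID
| PUSH (x v : nat)
| DUP (x : nat)
| SWAP (x : nat)
| OTHER (delta alpha : nat).

Definition isize (b : instr) : nat :=
  match b with PUSH x _ => x.+1 | _ => 1 end.

Definition is_jump (b : instr) : bool :=
  match b with JUMP | JUMPI => true | _ => false end.
Definition is_end (b : instr) : bool :=
  match b with REVERT | STOP | INVALID => true | _ => false end.
Definition is_jumpdest (b : instr) : bool :=
  match b with JUMPDEST => true | _ => false end.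
Definition is_JUMPI (b : instr) : bool :=
  match b with JUMPI => true | _ => false end.

(* An EVM program: a finite sequence of instructions b_0, ..., b_p laid out
   at consecutive byte offsets starting at 0. *)
Definition program := seq instr.

Fixpoint instr_at_from (P : program) (off pc : nat) : option instr :=
  match P with
  | [::] => None
  | b :: P' => if pc == off then Some b else instr_at_from P' (off + isize b) pc
  end.

Definition instr_at (P : program) (pc : nat) : option instr := instr_at_from P 0 pc.

Definition jdest (P : program) (v : nat) : bool :=
  if instr_at P v is Some b then is_jumpdest b else false.

(* Stack states <n, sigma>: sigma a partial map from positions to finite sets
   of jump destinations (position s_i is the natural number i). *)
Definition stmap := nat -> option {fset nat}.
Definition sstate := (nat * stmap)%type.
Definition sigma0 : stmap := fun _ => None.
Definition init_st : sstate := (0, sigma0).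

Definition upd (m : stmap) (x : nat) (y : {fset nat}) : stmap :=
  fun p => if p == x then Some y else m p.
Definition remv (m : stmap) (xs : seq nat) : stmap :=
  fun p => if p \in xs then None else m p.
Definition swp (m : stmap) (a b : nat) : stmap :=
  fun p => if p == a then m b else if p == b then m a else m p.

(* The update function lambda (End instructions have no update; the value
   given to them below is never used). *)
Definition lam (P : program) (b : instr) (st : sstate) : sstate :=
  let: (n, sg) := st in
  match b with
  | JUMP => (n - 1, remv sg [:: n - 1])
  | JUMPI => (n - 2, remv sg [:: n - 1; n - 2])
  | PUSH _ v => if jdest P v then (n.+1, upd sg n [fset v]) else (n.+1, sg)
  | DUP x => match sg (n - x) with
             | Some D => (n.+1, upd sg n D)
             | None => (n.+1, sg)
             end
  | SWAP x => (n, swp sg (n - 1) (n - x - 1))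
  | OTHER d a => (n - d + a, remv sg [seq n - i.+1 | i <- iota 0 d])
  | JUMPDEST => (n, sg)            (* JUMPDEST is b^{0,0} *)
  | _ => st
  end.

Definition state := (nat * sstate)%type.

Inductive step (P : program) : state -> state -> Prop :=
| step_jump pc n sg v :
    instr_at P pc = Some JUMP -> sg (n - 1) = Some [fset v] ->
    step P (pc, (n, sg)) (v, (n - 1, remv sg [:: n - 1]))
| step_jumpi_taken pc n sg v :
    instr_at P pc = Some JUMPI -> sg (n - 1) = Some [fset v] ->
    step P (pc, (n, sg)) (v, (n - 2, remv sg [:: n - 1; n - 2]))
| step_jumpi_next pc n sg :
    instr_at P pc = Some JUMPI ->
    step P (pc, (n, sg)) (pc + isize JUMPI, (n - 2, remv sg [:: n - 1; n - 2]))
| step_other pc b st :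
    instr_at P pc = Some b -> ~~ is_jump b -> ~~ is_end b ->
    step P (pc, st) (pc + isize b, lam P b st).

Definition trace (P : program) (S : nat -> state) (m : nat) : Prop :=
  S 0 = (0, init_st) /\ forall l, l < m -> step P (S l) (S l.+1).

(* Blocks, identified by the pc of their first instruction. *)
Definition is_block_start (P : program) (i : nat) : bool :=
  isSome (instr_at P i) &&
  [|| i == 0,
      (if instr_at P i is Some b then is_jumpdest b else false)
    | (0 < i) && (if instr_at P i.-1 is Some b then is_JUMPI b else false)].

Definition ends_block (P : program) (j : nat) : bool :=
  match instr_at P j with
  | Some b => [|| is_jump b, is_end b |
                 match instr_at P (j + isize b) with
                 | Some c => is_jumpdest c
                 | None => true        (* b_j is the last instruction of P *)
                 end]
  | None => false
  end.

Definition block (P : program) (i j : nat) : Prop :=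
  is_block_start P i /\ i <= j /\ ends_block P j /\
  forall k, i <= k < j -> isSome (instr_at P k) -> ~~ ends_block P k.

Definition exec_blocks (P : program) (S : nat -> state) (m : nat) : seq nat :=
  [seq (S l).1 | l <- [seq l <- iota 0 m.+1 | is_block_start P (S l).1]].

(* Families of abstract states X_pc : partial maps from stack states to sets
   of stack states; Xdom pc s  <-> s \in dom(X_pc),
   Xval pc s t <-> t \in X_pc(s). *)
Record absfam := AbsFam {
  Xdom : nat -> sstate -> Prop;
  Xval : nat -> sstate -> sstate -> Prop }.

Definition absfam_wf (X : absfam) : Prop :=
  forall pc s t, Xval X pc s t -> Xdom X pc s.

Definition absfam_le (X Y : absfam) : Prop :=
  (forall pc s, Xdom X pc s -> Xdom Y pc s) /\
  (forall pc s t, Xval X pc s t -> Xval Y pc s t).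

Definition ge_idmap (X : absfam) (pc : nat) (t : sstate) : Prop :=
  Xdom X pc t /\ Xval X pc t t.

Definition ge_tau (P : program) (X : absfam) (pc' : nat) (b : instr) (pc : nat) : Prop :=
  (forall s, Xdom X pc s -> Xdom X pc' s) /\
  (forall s t, Xdom X pc s -> Xval X pc s t -> Xval X pc' s (lam P b t)).

Definition next_is_jumpdest (P : program) (pc : nat) (b : instr) : bool :=
  if instr_at P (pc + isize b) is Some c then is_jumpdest c else false.

Definition addr_solution (P : program) (X : absfam) : Prop :=
  ge_idmap X 0 init_st /\
  forall pc b, instr_at P pc = Some b ->
    (is_jump b -> forall s n sg D v, Xdom X pc s -> Xval X pc s (n, sg) ->
        sg (n - 1) = Some D -> v \in D -> ge_idmap X v (lam P b (n, sg))) /\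
    (is_JUMPI b -> forall s t, Xdom X pc s -> Xval X pc s t ->
        ge_idmap X (pc + isize b) (lam P b t)) /\
    (~~ is_jump b -> ~~ is_end b -> next_is_jumpdest P pc b ->
        forall s t, Xdom X pc s -> Xval X pc s t ->
        ge_idmap X (pc + isize b) (lam P b t)) /\
    (~~ is_jump b -> ~~ is_end b -> ~~ next_is_jumpdest P pc b ->
        ge_tau P X (pc + isize b) b pc).

Definition least_addr_solution (P : program) (X : absfam) : Prop :=
  absfam_wf X /\ addr_solution P X /\
  forall Y, absfam_wf Y -> addr_solution P Y -> absfam_le X Y.

Definition vertex := (nat * sstate)%type.

Definition is_vertex (P : program) (X : absfam) (v : vertex) : Prop :=
  (exists j, block P v.1 j) /\ Xdom X v.1 v.2.

Definition is_edge (P : program) (X : absfam) (v w : vertex) : Prop :=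
  exists j b n' sg',
    block P v.1 j /\ instr_at P j = Some b /\
    Xdom X j v.2 /\ Xval X j v.2 (n', sg') /\
    w.2 = lam P b (n', sg') /\
    ((is_jump b /\ exists D, sg' (n' - 1) = Some D /\ w.1 \in D) \/
     (b <> JUMP /\ ~~ is_end b /\ w.1 = j + isize b)).

(* Main.v *)
Require Import Defs.
From mathcomp Require Import all_boot finmap.
From mathcomp Require Import zify.

Section Helpers.

Lemma isize_gt0 b : 0 < isize b.
Proof. by case: b. Qed.

Lemma iaf_lt P off k : k < off -> instr_at_from P off k = None.
Proof.
elim: P off => [//|c P IH] off /= Hk.
have -> : (k == off) = false by apply/eqP; lia.
apply: IH; have := isize_gt0 c; lia.
Qed.

Lemma iaf_ge P off a b : instr_at_from P off a = Some b -> off <= a.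
Proof. by case: (leqP off a) => // /(iaf_lt P) ->. Qed.

Lemma iaf_between P off a b k : instr_at_from P off a = Some b ->
  a < k < a + isize b -> instr_at_from P off k = None.
Proof.
elim: P off => [//|c P IH] off /=.
case: eqP => [-> [<-] Hk | Hne Ha Hk].
- have -> : (k == off) = false by apply/eqP; lia.
  apply: iaf_lt; lia.
- have Hge := @iaf_ge _ _ _ _ Ha.
  have -> : (k == off) = false by apply/eqP; lia.
  exact: IH Ha Hk.
Qed.

Lemma iaf_N P off k b : instr_at_from P off k = Some b ->
  k < off + sumn (map isize P).
Proof.
elim: P off => [//|c P IH] off /=.
case: eqP => [-> _ | _ H]; first by have := isize_gt0 c; lia.
have := IH _ H; lia.
Qed.

Lemma ends_some P j : ends_block P j -> isSome (instr_at P j).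
Proof. by rewrite /ends_block; case: (instr_at P j). Qed.

Lemma block_ext P i : forall pc, i <= pc -> isSome (instr_at P pc) ->
  (forall k, i <= k < pc -> isSome (instr_at P k) -> ~~ ends_block P k) ->
  exists j, pc <= j /\ ends_block P j /\
    forall k, i <= k < j -> isSome (instr_at P k) -> ~~ ends_block P k.
Proof.
set N := sumn (map isize P).
suff H : forall d pc, N - pc <= d -> i <= pc -> isSome (instr_at P pc) ->
  (forall k, i <= k < pc -> isSome (instr_at P k) -> ~~ ends_block P k) ->
  exists j, pc <= j /\ ends_block P j /\
    forall k, i <= k < j -> isSome (instr_at P k) -> ~~ ends_block P k.
  by move=> pc; apply: (H (N - pc)).
elim=> [|d IH] pc Hd Hi Hs Hk;
  case Hend: (ends_block P pc); try by exists pc.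
all: case Hb: (instr_at P pc) Hs => [b|] // _.
all: have HN := @iaf_N _ _ _ _ Hb; rewrite add0n -/N in HN.
  lia.
move: Hend; rewrite /ends_block Hb.
case E: (instr_at P (pc + isize b)) => [c|]; last by rewrite !orbT.
move=> Hend.
have Hb0 := isize_gt0 b.
have [||||j [H1 [H2 H3]]] := IH (pc + isize b).
- lia.
- lia.
- by rewrite E.
- move=> k /andP [Hk1 Hk2] Hks.
  case: (ltnP k pc) => Hkp.
    by apply: Hk => //; rewrite Hk1.
  case: (eqVneq k pc) => [->|Hne].
    by rewrite /ends_block Hb E Hend.
  have HN' : instr_at P k = None.
    by apply: (@iaf_between _ _ _ _ k Hb); apply/andP; split; lia.
  by rewrite HN' in Hks.
- exists j; split => //; lia.
Qed.

Lemma block_of P i : is_block_start P i -> exists j, block P i j /\ i <= j.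
Proof.
move=> Hbs; have /andP [Hs _] := Hbs.
have [|j [H1 [H2 H3]]] := @block_ext P i i (leqnn i) Hs.
  move=> k /andP [H1 H2]; lia.
by exists j; do !split.
Qed.

Definition ok_st P (st : sstate) :=
  forall p D v, st.2 p = Some D -> v \in D -> jdest P v.

Lemma ok_remv P n n' sg xs : ok_st P (n, sg) -> ok_st P (n', remv sg xs).
Proof. move=> H p D v /=; rewrite /remv; case: ifP => // _; exact: H. Qed.

Lemma ok_lam P b st : ok_st P st -> ok_st P (lam P b st).
Proof.
case: st => n sg H.
case: b => /=; try exact: (@ok_remv P n _ sg _ H); try exact: H.
- move=> x v; case: ifP => Hj // p D w /=; rewrite /upd.
  case: eqP => _; last exact: H.
  by move=> [<-]; rewrite inE => /eqP ->.
- move=> x; case E: (sg (n - x)) => [D|] // p D' w /=; rewrite /upd.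
  case: eqP => _; last exact: H.
  by move=> [<-]; apply: H E.
- move=> x p D w /=; rewrite /swp.
  by case: eqP => _; [|case: eqP => _]; apply: H.
- move=> d a; exact: (@ok_remv P n _ sg _ H).
Qed.

Lemma jdest_start P v : jdest P v -> is_block_start P v.
Proof.
rewrite /jdest /is_block_start; case: (instr_at P v) => // b Hb.
by rewrite /= Hb orbT.
Qed.

Lemma pc_eq_j P i j pc : block P i j -> i <= pc -> pc <= j ->
  ends_block P pc -> pc = j.
Proof.
move=> [_ [_ [_ H4]]] Hi Hj He.
case: (ltnP pc j) => Hlt; last lia.
have := H4 pc; rewrite Hi Hlt (@ends_some P pc He) He.
by move=> /(_ isT isT).
Qed.

Lemma exec_S P S m : exec_blocks P S m.+1 = exec_blocks P S m ++
  (if is_block_start P (S m.+1).1 then [:: (S m.+1).1] else [::]).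
Proof.
rewrite /exec_blocks -addn1 iotaD filter_cat map_cat /= add0n.
by case: (is_block_start P (S m.+1).1).
Qed.

Definition dv : vertex := (0, init_st).

Definition Inv P X (S : nat -> state) m' :=
 exists vs0 i s j,
   map fst (rcons vs0 (i,s)) = exec_blocks P S m' /\
   (nth dv (rcons vs0 (i,s)) 0).2 = init_st /\
   (forall l, l < size (rcons vs0 (i,s)) -> is_vertex P X (nth dv (rcons vs0 (i,s)) l)) /\
   (forall l, l.+1 < size (rcons vs0 (i,s)) ->
      is_edge P X (nth dv (rcons vs0 (i,s)) l) (nth dv (rcons vs0 (i,s)) l.+1)) /\
   block P i j /\ Xdom X i s /\ i <= (S m').1 /\ ok_st P (S m').2 /\
   (instr_at P (S m').1 = None \/
     ((S m').1 <= j /\ Xdom X (S m').1 s /\ Xval X (S m').1 s (S m').2)).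

Lemma Inv_exit P X S m' vs0 i s pc' s' :
  map fst (rcons vs0 (i,s)) = exec_blocks P S m' ->
  (nth dv (rcons vs0 (i,s)) 0).2 = init_st ->
  (forall l, l < size (rcons vs0 (i,s)) -> is_vertex P X (nth dv (rcons vs0 (i,s)) l)) ->
  (forall l, l.+1 < size (rcons vs0 (i,s)) ->
      is_edge P X (nth dv (rcons vs0 (i,s)) l) (nth dv (rcons vs0 (i,s)) l.+1)) ->
  is_edge P X (i,s) (pc',s') -> is_block_start P pc' -> ge_idmap X pc' s' ->
  S m'.+1 = (pc', s') -> ok_st P s' -> Inv P X S m'.+1.
Proof.
move=> H1 H2 H3 H4 He Hbs [Hd Hv] ES Hok.
have [j' [Hbl Hij]] := @block_of P pc' Hbs.
exists (rcons vs0 (i,s)), pc', s', j'; rewrite ES /=.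
split; first by rewrite map_rcons H1 exec_S ES /= Hbs cats1.
split; first by rewrite nth_rcons size_rcons.
split.
  move=> l; rewrite size_rcons nth_rcons ltnS leq_eqVlt.
  case/orP => [/eqP ->|Hl]; first by rewrite ltnn eqxx; split => //; exists j'.
  by rewrite Hl; apply: H3.
split.
  move=> l; rewrite size_rcons ltnS !(nth_rcons _ (rcons vs0 (i,s))) => Hl.
  have Hl' : l < size (rcons vs0 (i, s)) by lia.
  rewrite Hl'.
  case: (ltnP l.+1 (size (rcons vs0 (i, s)))) => Hl2; first by apply: H4.
  have El : l.+1 = size (rcons vs0 (i, s)) by lia.
  rewrite El eqxx.
  have -> : l = size vs0 by move: El; rewrite size_rcons; case.
  by rewrite nth_rcons ltnn eqxx.
do !split => //; right; do !split => //.
Qed.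


Lemma step_inv P pc n sg S' : step P (pc,(n,sg)) S' ->
  (exists v, instr_at P pc = Some JUMP /\ sg (n-1) = Some [fset v]%fset /\
     S' = (v, lam P JUMP (n, sg))) \/
  (exists v, instr_at P pc = Some JUMPI /\ sg (n-1) = Some [fset v]%fset /\
     S' = (v, lam P JUMPI (n, sg))) \/
  (instr_at P pc = Some JUMPI /\ S' = (pc + isize JUMPI, lam P JUMPI (n, sg))) \/
  (exists b, instr_at P pc = Some b /\ ~~ is_jump b /\ ~~ is_end b /\
     S' = (pc + isize b, lam P b (n, sg))).
Proof.
move=> H; inversion H; subst.
- by left; exists v.
- by right; left; exists v.
- by right; right; left.
- by right; right; right; exists b.
Qed.

Lemma not_jumpi_before P pc b : instr_at P pc = Some b -> ~~ is_jump b ->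
  (if instr_at P (pc + isize b).-1 is Some c then is_JUMPI c else false) = false.
Proof.
move=> Hb Hnj.
have H1 : isize b = 1 -> (if instr_at P (pc + isize b).-1 is Some c then is_JUMPI c else false) = false.
  move=> ->; rewrite addn1 /= Hb; by case: b Hb Hnj.
case: b Hb Hnj H1 => //; try by move=> *; auto.
move=> [|x] v Hb _ H1; first by apply: H1.
have -> : (pc + isize (PUSH x.+1 v)).-1 = pc + x.+1 by rewrite /=; lia.
have -> // : instr_at P (pc + x.+1) = None.
apply: (@iaf_between _ _ _ _ _ Hb); rewrite /=; apply/andP; split; lia.
Qed.

Lemma main P X S m : addr_solution P X -> trace P S m ->
  isSome (instr_at P 0) -> forall m', m' <= m -> Inv P X S m'.
Proof.
move=> [Hinit Hsol] [HS0 Hstep] Hi0.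
elim=> [_|m' IH Hm].
- have Hbs : is_block_start P 0 by rewrite /is_block_start Hi0.
  have [j [Hbl _]] := @block_of P 0 Hbs.
  exists [::], 0, init_st, j; rewrite HS0 /=.
  split; first by rewrite /exec_blocks /= HS0 Hbs /= HS0.
  split; first done.
  split.
    move=> l; rewrite ltnS leqn0 => /eqP -> /=.
    by split; [exists j| exact: Hinit.1].
  split; first by move=> l; rewrite ltnS ltn0.
  split; first done.
  split; first exact: Hinit.1.
  split; first done.
  split; first by move=> p D v.
  right; split; first by case: Hbl => [_ [H _]].
  exact: Hinit.
- have Hm' : m' <= m by lia.
  have [vs0 [i [s [j [H1 [H2 [H3 [H4 [Hbl [Hdi [Hipc [Hok Hcur]]]]]]]]]]]] := IH Hm'.
  have Hst := Hstep m' Hm.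
  have Eex := exec_S P S m'.
  move: Hst Hipc Hok Hcur; case ES0: (S m') => [pc [n sg]] /= Hst Hipc Hok Hcur.
  have Hcur' : forall b, instr_at P pc = Some b ->
     pc <= j /\ Xdom X pc s /\ Xval X pc s (n, sg).
    by move=> b Hb; case: Hcur => //; rewrite Hb.
  have Hokl : forall b, ok_st P (lam P b (n, sg)) by move=> b; apply: ok_lam.
  have Hexit : forall b, instr_at P pc = Some b -> ends_block P pc -> pc = j.
    move=> b Hb He; have [Hpj _] := Hcur' b Hb; exact: pc_eq_j Hbl Hipc Hpj He.
  case: (step_inv _ _ _ _ _ Hst) => [[v [Hb [Hsg ES1]]]|[[v [Hb [Hsg ES1]]]|[[Hb ES1]|[b [Hb [Hnj [Hne ES1]]]]]]].
  + have [Hpj [Hdpc Hvpc]] := Hcur' _ Hb.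
    have Hjd : jdest P v := Hok (n-1) _ v Hsg (fset11 v).
    have Hpe : pc = j by apply: (Hexit _ Hb); rewrite /ends_block Hb.
    have [Hsol1 _] := Hsol pc JUMP Hb.
    have Hid := Hsol1 isT s n sg [fset v]%fset v Hdpc Hvpc Hsg (fset11 v).
    apply: (@Inv_exit P X S m' vs0 i s v _ H1 H2 H3 H4 _ (@jdest_start _ _ Hjd) Hid ES1 (Hokl _)).
    exists pc, JUMP, n, sg; split; first by rewrite Hpe.
    do 4 (split; first done).
    by left; split => //; exists [fset v]%fset; split => //; exact: fset11.
  + have [Hpj [Hdpc Hvpc]] := Hcur' _ Hb.
    have Hjd : jdest P v := Hok (n-1) _ v Hsg (fset11 v).
    have Hpe : pc = j by apply: (Hexit _ Hb); rewrite /ends_block Hb.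
    have [Hsol1 _] := Hsol pc JUMPI Hb.
    have Hid := Hsol1 isT s n sg [fset v]%fset v Hdpc Hvpc Hsg (fset11 v).
    apply: (@Inv_exit P X S m' vs0 i s v _ H1 H2 H3 H4 _ (@jdest_start _ _ Hjd) Hid ES1 (Hokl _)).
    exists pc, JUMPI, n, sg; split; first by rewrite Hpe.
    do 4 (split; first done).
    by left; split => //; exists [fset v]%fset; split => //; exact: fset11.
  + have [Hpj [Hdpc Hvpc]] := Hcur' _ Hb.
    case E: (instr_at P (pc + isize JUMPI)) => [c|].
    * have Hbs : is_block_start P (pc + isize JUMPI).
        by rewrite /is_block_start E /= addn1 /= Hb !orbT.
      have Hpe : pc = j by apply: (Hexit _ Hb); rewrite /ends_block Hb.
      have [_ [Hsol2 _]] := Hsol pc JUMPI Hb.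
      have Hid := Hsol2 isT s (n, sg) Hdpc Hvpc.
      apply: (@Inv_exit P X S m' vs0 i s _ _ H1 H2 H3 H4 _ Hbs Hid ES1 (Hokl _)).
      exists pc, JUMPI, n, sg; split; first by rewrite Hpe.
    do 4 (split; first done).
      by right.
    * have Hnbs : is_block_start P (pc + isize JUMPI) = false.
        by rewrite /is_block_start E.
      rewrite ES1 /= Hnbs cats0 in Eex.
      exists vs0, i, s, j; rewrite ES1 /=.
      split; first by rewrite Eex.
      do 5 (split; first done).
      split; first by rewrite addn1; lia.
      split; first exact: (Hokl JUMPI).
      by left.
  + have [Hpj [Hdpc Hvpc]] := Hcur' _ Hb.
    have [_ [_ [Hsol3 Hsol4]]] := Hsol pc b Hb.
    have Hb0 := isize_gt0 b.
    case Hn: (next_is_jumpdest P pc b).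
    * move: Hn; rewrite /next_is_jumpdest.
      case E: (instr_at P (pc + isize b)) => [c|] // Hn.
      have Hbs : is_block_start P (pc + isize b) by rewrite /is_block_start E /= Hn orbT.
      have Hpe : pc = j by apply: (Hexit _ Hb); rewrite /ends_block Hb E Hn !orbT.
      have Hnj' : next_is_jumpdest P pc b by rewrite /next_is_jumpdest E.
      have Hid := Hsol3 Hnj Hne Hnj' s (n, sg) Hdpc Hvpc.
      apply: (@Inv_exit P X S m' vs0 i s _ _ H1 H2 H3 H4 _ Hbs Hid ES1 (Hokl _)).
      exists pc, b, n, sg; split; first by rewrite Hpe.
    do 4 (split; first done).
      by right; split => //; move=> Eb; rewrite Eb in Hnj.
    * have Hjb := @not_jumpi_before _ _ _ Hb Hnj.
      have Hz : (pc + isize b == 0) = false by apply/eqP; lia.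
      have Hnbs : is_block_start P (pc + isize b) = false.
        move: Hn; rewrite /next_is_jumpdest /is_block_start Hz Hjb => ->.
        by rewrite !andbF.
      rewrite ES1 /= Hnbs cats0 in Eex.
      have [Ht1 Ht2] := Hsol4 Hnj Hne (negbT Hn).
      exists vs0, i, s, j; rewrite ES1 /=.
      split; first by rewrite Eex.
      do 5 (split; first done).
      split; first lia.
      split; first exact: (Hokl b).
      case E: (instr_at P (pc + isize b)) => [c|]; last by left.
      right; split; last by split; [exact: (Ht1 s Hdpc) | exact: (Ht2 s (n, sg) Hdpc Hvpc)].
      have Hnend : ends_block P pc = false.
        move: Hn; rewrite /next_is_jumpdest /ends_block Hb E => ->.
        by rewrite (negbTE Hnj) (negbTE Hne).
      have Hpj' : pc < j.
        rewrite ltn_neqAle Hpj andbT; apply/eqP => Epj.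
        by case: Hbl => [_ [_ [He _]]]; rewrite -Epj Hnend in He.
      case: (leqP (pc + isize b) j) => // Hlt.
      have Hjn : instr_at P j = None.
        by apply: (@iaf_between _ _ _ _ _ Hb); apply/andP; split.
      by case: Hbl => [_ [_ [He _]]]; have := @ends_some _ _ He; rewrite Hjn.
Qed.
End Helpers.

Theorem theorem2 (P : program) (X : absfam) (S : nat -> state) (m : nat) :
  least_addr_solution P X -> trace P S m ->
  exists vs : seq vertex,
    map fst vs = exec_blocks P S m /\
    (forall v0 vs', vs = v0 :: vs' -> v0.2 = init_st) /\
    (forall l, l < size vs -> is_vertex P X (nth (0, init_st) vs l)) /\
    (forall l, l.+1 < size vs ->
       is_edge P X (nth (0, init_st) vs l) (nth (0, init_st) vs l.+1)).
Proof.
move=> [_ [Hsol _]] Htr.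
case Hi0: (instr_at P 0) => [b0|].
- have Hi0' : isSome (instr_at P 0) by rewrite Hi0.
  have [vs0 [i [s [j [H1 [H2 [H3 [H4 _]]]]]]]] :=
    @main _ _ _ _ Hsol Htr Hi0' m (leqnn m).
  exists (rcons vs0 (i,s)); do !split => //.
  by move=> v0 vs' E; rewrite E in H2.
- have Hm0 : m = 0.
    case: m Htr => // m [HS0 Hst].
    have := Hst 0 isT; rewrite HS0 => /(step_inv _ _ _ _ _).
    by rewrite Hi0 => -[[v [H _]]|[[v [H _]]|[[H _]|[b [H _]]]]].
  exists [::]; rewrite Hm0 /exec_blocks /=.
  case: Htr => HS0 _; rewrite HS0 /is_block_start Hi0 /=.
  by do !split.
Qed.
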